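(* Assume the standing assumptions below. Let $\{u^{(k)}=w_{i_k}\cdots w_{j_k}\}_{k\ge0}$ be a $\Delta$-sequence whose signed left stretches $\sigma^{(k)}=\sigma$ and signed right stretches $\rho^{(k)}=\rho$ are constant for all $k\ge1$. Let $A$ be the incidence matrix of $h$ and $\mathbf 1$ the all-ones row vector of length $|\Sigma|$. Then there exist integral column vectors $U,V,X,Y$ of length $|\Sigma|$, with $U,V$ nonnegative and nonzero, and a constant $c$, such that for all $k\ge0$: $i_k=\mathbf 1\big(A^kV+(\sum_{n=0}^{k-1}A^n)X\big)$; $j_k=i_k+\mathbf 1\big(A^kU+(\sum_{n=0}^{k-1}A^n)Y\big)-1$; and $j_k/i_k<c$.
   Context: Standing assumptions: $\Sigma=\{0,\dots,n-1\}$ is a finite alphabet; $h:\Sigma^*\to\Sigma^*$ is a nonerasing morphism prolongable on $w_0$ and $\mathbf w=w_0w_1w_2\cdots=h^\omega(w_0)$ is aperiodic; $h$ satisfies $\mathrm{alph}(h^n(a))=\mathrm{alph}(h(a))$ for all $a$, $n\ge1$ ($\mathrm{alph}(w)$ = set of letters of $w$); $M=\max\{|h(a)|:a\in\Sigma\}$; $\Delta\subsetneq\Sigma$ nonempty, $\overline\Delta=\Sigma\setminus\Delta$. Positions are indexed from $0$. The incidence matrix $A=(a_{i,j})$ of $h$ has $a_{i,j}=|h(j)|_i$ (number of occurrences of letter $i$ in $h(j)$). A factor $w_i\cdots w_j$ is a $\Delta$-block if all its letters are in $\Delta$; maximal if also $w_{j+1}\in\overline\Delta$ and ($i=0$ or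 $w_{i-1}\in\overline\Delta$). Occurrences are factors with position intervals; $u'\prec u$ means interval containment. Since $\mathbf w=h(w_0)h(w_1)\cdots$, $h(w_p\cdots w_q)$ denotes the occurrence occupying the positions of blocks $h(w_p),\dots,h(w_q)$. A $\Delta$-sequence is a sequence $u^{(k)}=w_{i_k}\cdots w_{j_k}$ ($k\ge0$) of maximal $\Delta$-blocks with $i_k>M$, $|u^{(k)}|>M^2$, and $h(w_{i_k+M}\cdots w_{j_k-M})\prec u^{(k+1)}\prec h(w_{i_k-M+1}\cdots w_{j_k+M-1})$. Stretches: let $h(w_{i_k})$ occupy positions $r_{k+1},\dots,s_{k+1}$ and $h(w_{j_k})$ occupy $m_{k+1},\dots,n_{k+1}$. Left stretch $\sigma^{(k+1)}$: positive word $w_{i_{k+1}}\cdots w_{r_{k+1}-1}$ if $i_{k+1}<r_{k+1}$; negative word $w_{r_{k+1}}\cdots w_{i_{k+1}-1}$ if $i_{k+1}>r_{k+1}$; $\epsilon$ if equal. Right stretch $\rho^{(k+1)}$: positive word $w_{n_{k+1}+1}\cdots w_{j_{k+1}}$ if $j_{k+1}>n_{k+1}$; negative word $w_{j_{k+1}+1}\cdots w_{n_{k+1}}$ if $j_{k+1}<n_{k+1}$; $\epsilon$ if equal. Stretches are pairs (word, sign). *)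

(* Defs.v *)
From HB Require Import structures.
From mathcomp Require Import all_boot all_order all_algebra.
Set Implicit Arguments. Unset Strict Implicit. Unset Printing Implicit Defensive.
Import Order.TTheory GRing.Theory Num.Theory.

(* Alphabet Sigma = 'I_n = {0,...,n-1}.  A morphism h : Sigma^* -> Sigma^* is
   given by the images of the letters, h : 'I_n -> seq 'I_n. *)

Section Morphic.
Variables (n : nat) (h : 'I_n -> seq 'I_n) (w0 : 'I_n).

Definition hstar (s : seq 'I_n) : seq 'I_n := flatten (map h s).
Definition hpow (k : nat) (s : seq 'I_n) : seq 'I_n := iter k hstar s.

Definition nonerasing : Prop := forall a, h a != [::].
Definition prolongable : Prop := exists x, h w0 = w0 :: x /\ x != [::].

(* the fixed point w = h^omega(w0), as a function of the position (from 0):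
   letter i of w is letter i of h^(i+1)(w0) (which has length >= i+2 when h is
   nonerasing and prolongable on w0) *)
Definition wfix (i : nat) : 'I_n := nth w0 (hpow i.+1 [:: w0]) i.

Definition aperiodic (w : nat -> 'I_n) : Prop :=
  ~ (exists p N, 0 < p /\ forall i, N <= i -> w (i + p) = w i).

Definition alph_stable : Prop :=
  forall (a : 'I_n) (k : nat), 0 < k -> hpow k [:: a] =i h a.

Definition Mh : nat := \max_(a : 'I_n) size (h a).

(* starting position of the block h(w_p) in w = h(w_0) h(w_1) ... ;
   h(w_p) occupies positions hpos p, ..., hpos (p+1) - 1 *)
Definition hpos (p : nat) : nat := \sum_(q < p) size (h (wfix q)).

(* factor w_a ... w_(b-1) (empty if b <= a) *)
Definition factor (a b : nat) : seq 'I_n := mkseq (fun t => wfix (a + t)) (b - a).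

Definition max_block (D : {set 'I_n}) (i j : nat) : Prop :=
  [/\ i <= j, (forall p, i <= p <= j -> wfix p \in D),
      wfix j.+1 \notin D & (i = 0 \/ wfix i.-1 \notin D)].

Definition Delta_sequence (D : {set 'I_n}) (i j : nat -> nat) : Prop :=
  forall k,
  [/\ max_block D (i k) (j k), Mh < i k, Mh ^ 2 < j k - i k + 1,
      (* h(w_(i_k+M) ... w_(j_k-M)) is contained in u^(k+1) *)
      i k.+1 <= hpos (i k + Mh) /\ hpos (j k - Mh).+1 <= (j k.+1).+1 &
      (* u^(k+1) is contained in h(w_(i_k-M+1) ... w_(j_k+M-1)) *)
      hpos (i k - Mh).+1 <= i k.+1 /\ j k.+1 < hpos (j k + Mh)].

End Morphic.

Inductive stretch (n : nat) : Type :=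
  | SPos of seq 'I_n
  | SNeg of seq 'I_n
  | SEps.
Arguments SEps {n}.

Section Stretch.
Variables (n : nat) (h : 'I_n -> seq 'I_n) (w0 : 'I_n).
Local Notation hpos := (hpos h w0).
Local Notation factor := (factor h w0).

(* left stretch sigma^(k+1), with r_(k+1) = hpos (i k) *)
Definition left_stretch (i : nat -> nat) (k : nat) : stretch n :=
  let r := hpos (i k) in
  if i k.+1 < r then SPos (factor (i k.+1) r)
  else if r < i k.+1 then SNeg (factor r (i k.+1))
  else SEps.

(* right stretch rho^(k+1), with n_(k+1) = hpos (j k + 1) - 1 *)
Definition right_stretch (j : nat -> nat) (k : nat) : stretch n :=
  let e := hpos (j k).+1 in
  if e <= j k.+1 then SPos (factor e (j k.+1).+1)
  else if (j k.+1).+1 < e then SNeg (factor (j k.+1).+1 e)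
  else SEps.

Definition incidence : 'M[int]_n :=
  \matrix_(x, y) Posz (count_mem x (h y)).
End Stretch.

Definition ones_row (n : nat) : 'rV[int]_n := const_mx 1%R.

(* Main.v *)
Require Import Defs.
From HB Require Import structures.
From mathcomp Require Import all_boot all_order all_algebra.
Import Order.TTheory GRing.Theory Num.Theory.
Set Implicit Arguments. Unset Strict Implicit. Unset Printing Implicit Defensive.


Section Aux.
Variables (n : nat) (h : 'I_n -> seq 'I_n) (w0 : 'I_n).

Lemma hstar_cat s t : hstar h (s ++ t) = hstar h s ++ hstar h t.
Proof. by rewrite /hstar map_cat flatten_cat. Qed.
Lemma hstar_cons a s : hstar h (a :: s) = h a ++ hstar h s.
Proof. by []. Qed.
Lemma hpowSl k s : hpow h k.+1 s = hstar h (hpow h k s).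
Proof. by []. Qed.
Lemma hpowS k s : hpow h k.+1 s = hpow h k (hstar h s).
Proof. by rewrite /hpow iterSr. Qed.
Lemma hpow_cat k s t : hpow h k (s ++ t) = hpow h k s ++ hpow h k t.
Proof. elim: k => [//|k IH]; by rewrite hpowSl IH hstar_cat. Qed.

Lemma size_hstar_ge (Hne : nonerasing h) s : size s <= size (hstar h s).
Proof.
elim: s => [//|a s IH]; rewrite hstar_cons size_cat /=.
have : 0 < size (h a) by rewrite lt0n size_eq0; apply: Hne.
by move=> H; rewrite -add1n leq_add.
Qed.

Lemma size_hstar_le s : size (hstar h s) <= Mh h * size s.
Proof.
elim: s => [|a s IH]; first by rewrite muln0.
rewrite hstar_cons size_cat /= mulnS leq_add //.
exact: (leq_bigmax (F := fun a => size (h a)) a).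
Qed.

Lemma size_hpow_ge (Hne : nonerasing h) k s : size s <= size (hpow h k s).
Proof.
elim: k => [//|k IH]; rewrite hpowSl; exact: leq_trans IH (size_hstar_ge Hne _).
Qed.

Lemma hpow_mem k x b : 0 < k -> alph_stable h ->
  (b \in hpow h k x) = (b \in hpow h 1 x).
Proof.
move=> k0 Hal; elim: x => [|a s IH]; first by rewrite /hpow iter_fix.
rewrite -cat1s !hpow_cat !mem_cat IH.
by rewrite (Hal a k k0) orbF.
Qed.

End Aux.

Section Fix.
Variables (n : nat) (h : 'I_n -> seq 'I_n) (w0 : 'I_n) (x : seq 'I_n).
Hypothesis Hx : h w0 = w0 :: x.
Hypothesis Hx0 : x != [::].
Hypothesis Hne : nonerasing h.

Definition G t := size (hpow h t [:: w0]).

Lemma hpow_w0S t : hpow h t.+1 [:: w0] = hpow h t [:: w0] ++ hpow h t x.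
Proof. by rewrite hpowS /hstar /= Hx cats0 -cat1s hpow_cat. Qed.

Lemma GS t : G t.+1 = G t + size (hpow h t x).
Proof. by rewrite /G hpow_w0S size_cat. Qed.

Lemma G_gt t : t < G t.
Proof.
elim: t => [//|t IH]; rewrite GS -addn1 leq_add //.
apply: leq_trans (size_hpow_ge Hne t x); by rewrite lt0n size_eq0.
Qed.

Lemma hpow_w0_prefix t d : exists s, hpow h (t + d) [:: w0] = hpow h t [:: w0] ++ s.
Proof.
elim: d => [|d [s IH]]; first by exists [::]; rewrite addn0 cats0.
by exists (s ++ hpow h (t + d) x); rewrite addnS hpow_w0S IH catA.
Qed.

Lemma wfix_nth t p : p < G t -> wfix h w0 p = nth w0 (hpow h t [:: w0]) p.
Proof.
move=> Hp; rewrite /wfix.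
have [s1 E1] := hpow_w0_prefix p.+1 t.
have [s2 E2] := hpow_w0_prefix t p.+1.
have Hp1 : p < size (hpow h p.+1 [:: w0]) by apply: leq_trans (G_gt _).
have -> : nth w0 (hpow h p.+1 [:: w0]) p = nth w0 (hpow h (p.+1 + t) [:: w0]) p.
  by rewrite E1 nth_cat Hp1.
by rewrite addnC E2 nth_cat Hp.
Qed.

Lemma factorE a b : factor h w0 a b = map (wfix h w0) (iota a (b - a)).
Proof.
have -> : iota a (b - a) = map (addn a) (iota 0 (b - a)) by rewrite -iotaDl addn0.
by rewrite /factor /mkseq -map_comp.
Qed.

Lemma factor_split a b c : a <= b -> b <= c ->
  factor h w0 a c = factor h w0 a b ++ factor h w0 b c.
Proof.
move=> ab bc; rewrite !factorE -map_cat.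
have -> : c - a = (b - a) + (c - b) by rewrite addnC addnBA // subnK.
by rewrite iotaD subnKC.
Qed.

Lemma factor0_take t m : m <= G t -> factor h w0 0 m = take m (hpow h t [:: w0]).
Proof.
move=> Hm; apply: (@eq_from_nth _ w0).
  by rewrite size_take /factor size_mkseq subn0; case: ltngtP Hm => // ->.
move=> q; rewrite /factor size_mkseq subn0 => Hq.
by rewrite nth_mkseq // nth_take // add0n (wfix_nth (t := t)) // (leq_trans Hq).
Qed.

Lemma hposS p : hpos h w0 p.+1 = hpos h w0 p + size (h (wfix h w0 p)).
Proof. by rewrite /hpos big_ord_recr. Qed.

Lemma size_hstar_factor p : size (hstar h (factor h w0 0 p)) = hpos h w0 p.
Proof.
elim: p => [|p IH]; first by rewrite /hpos big_ord0.
rewrite (factor_split (b := p)) // hstar_cat size_cat IH hposS.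
by rewrite /factor subSnn /= /hstar /= cats0 addn0.
Qed.

Lemma hstar_factor p : factor h w0 0 (hpos h w0 p) = hstar h (factor h w0 0 p).
Proof.
set S := hpow h p [:: w0].
have Hp : p <= G p by apply: ltnW (G_gt p).
have E : hstar h S = hstar h (take p S) ++ hstar h (drop p S)
  by rewrite -hstar_cat cat_take_drop.
rewrite (factor0_take (t := p.+1)); last first.
  by rewrite -size_hstar_factor /G hpowSl -/S (factor0_take Hp) E size_cat leq_addr.
by rewrite hpowSl -/S E -size_hstar_factor (factor0_take Hp) take_size_cat.
Qed.

Lemma wfix_window t p : G t <= p < G t.+1 ->
  wfix h w0 p = nth w0 (hpow h t x) (p - G t).
Proof.
case/andP=> H1 H2; rewrite (wfix_nth H2) hpow_w0S nth_cat -/(G t).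
by rewrite ltnNge H1.
Qed.

Lemma window_mem t b : b \in hpow h t x ->
  exists q, G t <= q < G t.+1 /\ wfix h w0 q = b.
Proof.
move=> Hb; exists (G t + index b (hpow h t x)).
rewrite leq_addr GS ltn_add2l index_mem Hb; split=> //.
by rewrite (wfix_window (t := t)) ?addKn ?nth_index // leq_addr GS ltn_add2l index_mem.
Qed.

Lemma find_window p : G 1 <= p -> exists t, 0 < t /\ G t <= p < G t.+1.
Proof.
suff H : forall d t, p - G t < d -> G t <= p -> 0 < t ->
    exists t', 0 < t' /\ G t' <= p < G t'.+1.
  by move=> Hp; apply: (H (p - G 1).+1 1).
elim=> [//|d IH] t Hd Ht t0.
case: (ltnP p (G t.+1)) => Hp; first by exists t; rewrite Ht Hp.
have HG : G t < G t.+1.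
  rewrite GS -addn1 leq_add2l lt0n size_eq0; apply/eqP=> E.
  by move: (size_hpow_ge Hne t x); rewrite E leqn0 size_eq0 (negbTE Hx0).
apply: (IH t.+1) => //.
rewrite -ltnS; apply: leq_trans Hd; rewrite ltnS ltn_sub2l //.
exact: leq_trans HG Hp.
Qed.

End Fix.

Lemma ratio_nat (n : nat) (h : 'I_n -> seq 'I_n) (w0 : 'I_n)
  (Hne : nonerasing h) (Hpro : prolongable h w0) (Halph : alph_stable h)
  (D : {set 'I_n}) (i j : nat -> nat) (Hseq : Delta_sequence h w0 D i j) k :
  j k < Mh h ^ 2 * i k.
Proof.
have [x [Hx Hx0]] := Hpro.
have G1 : G h w0 1 <= Mh h.
  by rewrite /G /= /hstar /= cats0; exact: (leq_bigmax (F := fun a => size (h a)) w0).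
have GM t : G h w0 t.+1 <= Mh h * G h w0 t by rewrite /G hpowSl size_hstar_le.
have [[ij0 Hin0 Hj0 _] Mi0 _ _ _] := Hseq 0%N.
have [t0 [t00 Ht0]] : exists t, 0 < t /\ G h w0 t <= (j 0%N).+1 < G h w0 t.+1.
  apply: (find_window Hx Hx0 Hne); apply: leq_trans G1 _.
  by apply: leq_trans (ltnW Mi0) _; apply: leq_trans ij0 _.
set b := wfix h w0 (j 0%N).+1.
have bt0 : b \in hpow h t0 x.
  rewrite /b (wfix_window Hx Hx0 Hne Ht0) mem_nth // -(ltn_add2l (G h w0 t0)) subnKC.
    by rewrite -(GS Hx); case/andP: Ht0.
  by case/andP: Ht0.
have bt t : 0 < t -> b \in hpow h t x.
  by move=> t1; rewrite (hpow_mem _ _ t1 Halph) -(hpow_mem _ _ t00 Halph).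
have [[ijk Hink _ _] Mik _ _ _] := Hseq k.
have [t [tt Ht]] : exists t, 0 < t /\ G h w0 t <= i k < G h w0 t.+1.
  by apply: (find_window Hx Hx0 Hne); apply: leq_trans G1 (ltnW Mik).
have [q [Hq Hqb]] := window_mem Hx Hx0 Hne (bt t.+1 (ltn0Sn _)).
have jq : j k < q.
  rewrite ltnNge; apply/negP => qj.
  have : wfix h w0 q \in D.
    apply: Hink; rewrite qj andbT; apply: ltnW; apply: leq_trans (proj2 (andP Ht)) _.
    by case/andP: Hq.
  by rewrite Hqb (negbTE Hj0).
apply: leq_trans jq _; apply: ltnW; apply: leq_trans (proj2 (andP Hq)) _.
apply: leq_trans (GM _) _; rewrite expnS -mulnA leq_mul2l; apply/orP; right.
apply: leq_trans (GM _) _; rewrite expn1 leq_mul2l; apply/orP; right.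
by case/andP: Ht.
Qed.
Local Open Scope ring_scope.

Section Cnt.
Variables (n : nat) (h : 'I_n -> seq 'I_n).

Definition cnt (s : seq 'I_n) : 'cV[int]_n := \col_x (count_mem x s)%:Z.

Lemma cnt_cat s t : cnt (s ++ t) = cnt s + cnt t.
Proof. by apply/matrixP => x y; rewrite !mxE count_cat PoszD. Qed.

Lemma cnt_hstar s : cnt (hstar h s) = incidence h *m cnt s.
Proof.
elim: s => [|a s IH].
  by apply/matrixP => x y; rewrite !mxE big1 // => z _; rewrite !mxE mulr0.
rewrite hstar_cons cnt_cat IH -cat1s cnt_cat mulmxDr; congr (_ + _).
apply/matrixP => x y; rewrite !mxE (bigD1 a) //= big1 ?addr0.
  by rewrite !mxE /= eqxx addn0 mulr1.
by move=> z za; rewrite !mxE /= eq_sym (negbTE za) mulr0.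
Qed.

Lemma ones_cnt s : (ones_row n *m cnt s) 0 0 = (size s)%:Z.
Proof.
rewrite !mxE; under eq_bigr do rewrite !mxE mul1r.
elim: s => [|a s IH]; first by rewrite big1.
rewrite /= (eq_bigr (fun x => (a == x)%:Z + (count_mem x s)%:Z)); last first.
  by move=> x _; rewrite PoszD.
rewrite big_split /= IH (bigD1 a) //= big1 ?eqxx ?addr0.
  by rewrite -PoszD.
by move=> z za; rewrite eq_sym (negbTE za).
Qed.

Lemma closed_form (A : 'M[int]_n) (F : nat -> 'cV[int]_n) C :
  (forall k, F k.+1 = A *m F k + C) ->
  forall k, F k = A ^+ k *m F 0%N + (\sum_(m < k) A ^+ m) *m C.
Proof.
move=> HF; elim=> [|k IH].
  by rewrite expr0 big_ord0 mul1mx mul0mx addr0.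
have eS : forall m, A ^+ m.+1 = A *m A ^+ m by move=> m; rewrite exprS mulmxE.
rewrite HF IH mulmxDr !mulmxA -eS big_ord_recl expr0.
have -> : \sum_(i < k) A ^+ lift ord0 i = A *m \sum_(m < k) A ^+ m.
  by rewrite mulmx_sumr; apply: eq_bigr => i _; rewrite eS.
rewrite mulmxDl -idmxE mul1mx.
by rewrite -addrA [C + _]addrC.
Qed.

End Cnt.
Unset Implicit Arguments. Unset Strict Implicit.

Lemma ac_zmod (V:zmodType) (a b c d : V): a + b + c - (a + d) = b + (c - d).
Proof. by rewrite opprD addrACA [a + b]addrC addrK. Qed.

Lemma intQ (m : nat) : ((m%:Z)%:~R : rat) = m%:R.
Proof. by []. Qed.

Theorem lemma15 (n : nat) (h : 'I_n -> seq 'I_n) (w0 : 'I_n)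
  (Hne : nonerasing h) (Hpro : prolongable h w0)
  (Hap : aperiodic (wfix h w0)) (Halph : alph_stable h)
  (D : {set 'I_n}) (HD0 : D != set0) (HDT : D != setT)
  (i j : nat -> nat) (Hseq : Delta_sequence h w0 D i j)
  (sigma rho : stretch n)
  (Hsig : forall k : nat, left_stretch h w0 i k = sigma)
  (Hrho : forall k : nat, right_stretch h w0 j k = rho) :
  let A := incidence h in
  exists (U V X Y : 'cV[int]_n) (c : rat),
    [/\ (forall x, 0 <= U x 0), U != 0, (forall x, 0 <= V x 0), V != 0 &
      forall k : nat,
        [/\ (i k)%:Z = (ones_row n *m (A ^+ k *m V + (\sum_(m < k) A ^+ m) *m X)) 0 0,
            (j k)%:Z = (i k)%:Z + (ones_row n *m (A ^+ k *m U + (\sum_(m < k) A ^+ m) *m Y)) 0 0 - 1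
          & (j k)%:Q / (i k)%:Q < c]].
Proof.
move=> A.
have [x [Hx Hx0]] := Hpro.
pose P k := cnt (factor h w0 0 (i k)).
pose T k := cnt (factor h w0 0 (j k).+1).
pose X := match sigma with SPos s => - cnt s | SNeg s => cnt s | SEps => 0 end.
pose Z := match rho with SPos s => cnt s | SNeg s => - cnt s | SEps => 0 end.
have HH p : cnt (factor h w0 0 (hpos h w0 p)) = A *m cnt (factor h w0 0 p).
  by rewrite (hstar_factor Hx Hx0 Hne) cnt_hstar.
have HP k : P k.+1 = A *m P k + X.
  rewrite /P /X -HH; move: (Hsig k); rewrite /left_stretch.
  case: ltngtP => H1 <-.
  - by rewrite (factor_split _ _ (leq0n _) (ltnW H1)) cnt_cat addrK.
  - by rewrite (factor_split _ _ (leq0n _) (ltnW H1)) cnt_cat.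
  - by rewrite H1 addr0.
have HT k : T k.+1 = A *m T k + Z.
  rewrite /T /Z -HH; move: (Hrho k); rewrite /right_stretch.
  case: (leqP (hpos h w0 (j k).+1) (j k.+1)) => H1.
    by move=> <-; rewrite (factor_split _ _ (leq0n _) (leqW H1)) cnt_cat.
  case: (ltnP (j k.+1).+1 (hpos h w0 (j k).+1)) => H2 <-.
    by rewrite (factor_split _ _ (leq0n _) (ltnW H2)) cnt_cat addrK.
  have -> : hpos h w0 (j k).+1 = (j k.+1).+1 by apply/eqP; rewrite eqn_leq H2 H1.
  by rewrite addr0.
have [[ij0 _ _ _] Mi0 _ _ _] := Hseq 0%N.
pose U := cnt (factor h w0 (i 0%N) (j 0%N).+1).
have T0 : T 0%N = P 0%N + U by rewrite /T /P /U -cnt_cat -(factor_split _ _ (leq0n _) (leqW ij0)).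
have CP := closed_form HP.
have Mh_lt k : (Mh h < i k)%N by have [_ ? _ _ _] := Hseq k.
have CT := closed_form HT.
exists U, (P 0%N), X, (Z - X), (Mh h ^ 2)%:R.
split.
- by move=> y; rewrite mxE le0z_nat.
- apply/eqP => U0.
  have := ones_cnt (factor h w0 (i 0%N) (j 0%N).+1).
  rewrite -/U U0 mulmx0 mxE /factor size_mkseq.
  have : (0 < (j 0%N).+1 - i 0%N)%N by rewrite subn_gt0 ltnS.
  by case: ((j 0%N).+1 - i 0%N)%N => [|m] // _ /eqP.
- by move=> y; rewrite mxE le0z_nat.
- apply/eqP => V0.
  have := ones_cnt (factor h w0 0 (i 0%N)).
  rewrite -/(P 0%N) V0 mulmx0 mxE /factor size_mkseq subn0.
  have : (0 < i 0%N)%N by apply: leq_ltn_trans Mi0.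
  by case: (i 0%N) => [|m] // _ /eqP.
move=> k; split.
- by rewrite -CP ones_cnt /factor size_mkseq subn0.
- have E : A ^+ k *m U + (\sum_(m < k) A ^+ m) *m (Z - X) = T k - P k.
    by rewrite CT CP T0 mulmxBr mulmxDr ac_zmod.
  rewrite E mulmxBr !mxE.
  have := ones_cnt (factor h w0 0 (j k).+1); rewrite !mxE => ->.
  have := ones_cnt (factor h w0 0 (i k)); rewrite !mxE => ->.
  rewrite /factor !size_mkseq !subn0 addrCA subrr addr0.
  by rewrite -addn1 PoszD addrK.
- rewrite !intQ ltr_pdivrMr; last by rewrite ltr0n; apply: leq_ltn_trans (Mh_lt k).
  by rewrite -natrM ltr_nat (ratio_nat Hne Hpro Halph Hseq).
Qed.
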